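(* Let $p>0$, let $N$ be even, and let $\alpha_j=1$ for all $j=1,\dots,N$. Then there exist $C_N=\frac{N!}{2[(N/2)!]^2}$ one-parameter families of solutions $\Phi\in H^2_\Gamma$ to the stationary NLS equation $-\phi_j''+\phi_j-(p+1)|\phi_j|^{2p}\phi_j=0$ on $\mathbb{R}^+$, $j=1,\dots,N$. Each family is generated from the state $\Phi=(\phi_1,\dots,\phi_N)^T$ with $$\phi_j(x)=\begin{cases}\phi(x+a),& j=1,\dots,N/2,\\ \phi(x-a),& j=N/2+1,\dots,N,\end{cases}$$ where $\phi(x)=\operatorname{sech}^{1/p}(px)$ and $a\in\mathbb{R}$ is arbitrary, by rearranging which $N/2$ edges carry the shift $+a$ and which $N/2$ edges carry the shift $-a$.
   Context: $\Gamma$ is a star graph of $N$ half-lines $\mathbb{R}^+$ joined at the vertex $x=0$. With all $\alpha_j=1$: $H^1_\Gamma=\{\Psi\in\oplus_{j=1}^NH^1(\mathbb{R}^+):\psi_1(0)=\dots=\psi_N(0)\}$ (continuity) and $H^2_\Gamma=\{\Psi\in\oplus_{j=1}^NH^2(\mathbb{R}^+)\cap H^1_\Gamma:\sum_{j=1}^N\psi_j'(0)=0\}$ (classical Kirchhoff condition). *)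

(* Defs.v *)
From Stdlib Require Import Reals.
From Coquelicot Require Import Coquelicot.
From mathcomp Require Import all_boot.
Local Open Scope R_scope.

Set Implicit Arguments.
Unset Strict Implicit.
Unset Printing Implicit Defensive.

(* |y|^q for q > 0, with the convention |0|^q = 0
   (Stdlib's Rpower is only meaningful for a positive base). *)
Definition absPow (y q : R) : R :=
  if Req_EM_T y 0 then 0 else Rpower (Rabs y) q.

Definition phi (p x : R) : R := Rpower (/ cosh (p * x)) (/ p).

Definition sq_int (g : R -> R) : Prop :=
  ex_RInt_gen (fun x => (g x ^ 2)) (at_point 0) (Rbar_locally p_infty).

(* Classical (regular) membership in H^2(R^+), with d1, d2 the first and
   second derivatives; d1 and f are continuous up to the vertex x = 0, so
   f 0 and d1 0 are the traces psi(0), psi'(0). *)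
Definition H2_half (f d1 d2 : R -> R) : Prop :=
  (forall x, (0 < x) -> is_derive f x (d1 x) /\ is_derive d1 x (d2 x)) /\
  filterlim f (at_right 0) (locally (f 0)) /\
  filterlim d1 (at_right 0) (locally (d1 0)) /\
  sq_int f /\ sq_int d1 /\ sq_int d2.

(* Psi in H^2_Gamma (continuity at the vertex + Kirchhoff condition with all
   alpha_j = 1) solving -psi_j'' + psi_j - (p+1)|psi_j|^{2p} psi_j = 0 on R^+. *)
Definition NLS_H2_solution (p : R) (N : nat) (Psi : 'I_N -> R -> R) : Prop :=
  exists D1 D2 : 'I_N -> R -> R,
    (forall j, H2_half (Psi j) (D1 j) (D2 j)) /\
    (forall j k, Psi j 0 = Psi k 0) /\
    \big[Rplus/0]_(j < N) D1 j 0 = 0 /\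
    (forall j x, (0 < x) ->
       (- D2 j x + Psi j x - (p + 1) * absPow (Psi j x) (2 * p) * Psi j x = 0)).

Definition state (N : nat) (S : {set 'I_N}) (p a : R) : 'I_N -> R -> R :=
  fun j x => if j \in S then phi p (x + a) else phi p (x - a).

Definition nls_family (N : nat) (S : {set 'I_N}) (p : R) : ('I_N -> R -> R) -> Prop :=
  fun Psi => exists a : R, Psi = state S p a.

(* Main.v *)
Require Import Defs.
From Stdlib Require Import Reals Lra Classical.
From Coquelicot Require Import Coquelicot.
Local Open Scope R_scope.

Definition d1f p y := - phi p y * (sinh (p*y) / cosh (p*y)).
Definition d2f p y := phi p y * (1 - (p+1) / (cosh (p*y))^2).

Lemma der1 p y : 0 < p -> is_derive (phi p) y (d1f p y).
Proof. intro hp. unfold d1f, phi, Rpower, cosh, sinh.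
pose proof (exp_pos (p*y)). pose proof (exp_pos (-(p*y))).
auto_derive.
- split; [lra|split;[|auto]]. apply Rinv_0_lt_compat; lra.
- unfold Rdiv. set (E := exp (/ p * _)). set (e1 := exp (p*y)) in *. set (e2 := exp (-(p*y))) in *.
  field. lra.
Qed.

Lemma der2 p y : 0 < p -> is_derive (d1f p) y (d2f p y).
Proof. intro hp. unfold d2f, d1f, phi, Rpower, cosh, sinh.
pose proof (exp_pos (p*y)). pose proof (exp_pos (-(p*y))).
auto_derive.
- repeat split; try lra. apply Rinv_0_lt_compat; lra.
- unfold Rdiv. set (E := exp (/ p * _)). set (e1 := exp (p*y)) in *. set (e2 := exp (-(p*y))) in *.
  assert (he: e2 = / e1) by (unfold e1, e2; apply exp_Ropp). rewrite he. field. split; try lra. assert (0 < e1 * e1 + 1) by nra. lra.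
Qed.

Lemma der3 p y : 0 < p -> ex_derive (d2f p) y.
Proof. intro hp. unfold d2f, phi, Rpower, cosh.
pose proof (exp_pos (p*y)). pose proof (exp_pos (-(p*y))).
auto_derive. repeat split; try lra. apply Rinv_0_lt_compat; lra.
assert (0 < (exp (p * y) + exp (- (p * y))) * / 2) by lra. 
assert (0 < ((exp (p * y) + exp (- (p * y))) * / 2) ^ 2) by (apply pow_lt; lra). lra.
Qed.

Lemma cosh_pos' x : 0 < cosh x.
Proof. unfold cosh. pose proof (exp_pos x). pose proof (exp_pos (-x)). lra. Qed.

Lemma cosh_ge1 x : 1 <= cosh x.
Proof. unfold cosh. pose proof (exp_pos x). rewrite exp_Ropp.
set (e := exp x) in *. assert (e + / e - 2 = (e-1)^2 * /e) by (field; lra).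
assert (0 <= (e-1)^2 * / e) by (apply Rmult_le_pos; [apply pow2_ge_0| left; apply Rinv_0_lt_compat; lra]).
lra. Qed.

Lemma sinh_le_cosh x : Rabs (sinh x) <= cosh x.
Proof. unfold sinh, cosh. pose proof (exp_pos x). pose proof (exp_pos (-x)).
apply Rabs_le. lra. Qed.

Lemma phi_pos p y : 0 < phi p y.
Proof. unfold phi, Rpower. apply exp_pos. Qed.

Lemma exp_le' x y : x <= y -> exp x <= exp y.
Proof. intro h. destruct (Rle_lt_or_eq_dec _ _ h) as [a| ->]; [left; apply exp_increasing; auto | lra]. Qed.

Lemma phi_bound p y : 0 < p -> phi p y <= exp (ln 2 / p - y).
Proof. intro hp. unfold phi, Rpower. 
assert (h1 : ln (exp (p*y) / 2) <= ln (cosh (p*y))).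
{ apply ln_le. pose proof (exp_pos (p*y)); lra. unfold cosh. pose proof (exp_pos (-(p*y))); lra. }
unfold Rdiv in h1. rewrite ln_mult, ln_exp, ln_Rinv in h1 by (try apply exp_pos; lra).
rewrite ln_Rinv by apply cosh_pos'.
apply exp_le'. 
assert (h2: 0 < / p) by (apply Rinv_0_lt_compat; lra).
replace (ln 2 / p - y) with (/p * (ln 2 - p * y)) by (field; lra).
apply Rmult_le_compat_l; lra.
Qed.
Lemma improper_mono (h : R -> R) M : (forall x, continuous h x) ->
  (forall x, 0 <= x -> 0 <= h x) -> (forall b, 0 <= b -> RInt h 0 b <= M) ->
  ex_RInt_gen h (at_point 0) (Rbar_locally p_infty).
Proof.
intros hc hpos hM.
assert (hex : forall a b, ex_RInt h a b) by (intros; apply (ex_RInt_continuous (V:=R_CompleteNormedModule)); auto).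
set (E := fun y => exists b, 0 <= b /\ y = RInt h 0 b).
destruct (completeness E) as [L [hub hlub]].
{ exists M. intros y [b [hb ->]]. auto. }
{ exists (RInt h 0 0), 0. split; [lra|auto]. }
exists L. intros P [eps Heps].
assert (exists b0, 0 <= b0 /\ L - eps < RInt h 0 b0) as [b0 [hb0 hlt]].
{ apply NNPP. intro hn. assert (L <= L - eps).
  { apply hlub. intros y [b [hb ->]]. apply Rnot_lt_le. intro hl. apply hn. exists b; auto. }
  destruct eps; simpl in *; lra. }
apply Filter_prod with (fun a => a = 0) (fun b => b0 < b).
- reflexivity.
- exists b0. auto.
- intros x y -> hy. exists (RInt h 0 y). split. apply (RInt_correct (V:=R_CompleteNormedModule)). apply hex.
  apply Heps. 
  assert (RInt h 0 y <= L) by (apply hub; exists y; split; [lra|auto]).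
  assert (RInt h 0 b0 <= RInt h 0 y).
  { rewrite <- (RInt_Chasles (V:=R_CompleteNormedModule) h 0 b0 y) by auto.
    assert (0 <= RInt h b0 y). apply RInt_ge_0; auto. lra. intros; apply hpos; lra.
    simpl. unfold plus; simpl. lra. }
  change (Rabs (RInt h 0 y - L) < eps). rewrite Rabs_left1; lra.
Qed.
Definition sq_int (g : R -> R) : Prop :=
  ex_RInt_gen (fun x => (g x ^ 2)) (at_point 0) (Rbar_locally p_infty).
Lemma RInt_expo C b : RInt (fun x => C * exp (-2 * x)) 0 b = C/2 - C/2 * exp(-2*b).
Proof.
apply is_RInt_unique.
replace (C/2 - C/2 * exp(-2*b)) with (minus ((fun x => -C/2 * exp (-2*x)) b) ((fun x => -C/2 * exp (-2*x)) 0)).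
2:{ cbv beta. unfold minus, plus, opp; simpl. replace (-2*0) with 0 by ring. rewrite exp_0. field. }
apply (is_RInt_derive (V:=R_CompleteNormedModule) (fun x => -C/2 * exp (-2*x))).
- intros x _. auto_derive; auto. field.
- intros x _. apply (ex_derive_continuous (V:=R_NormedModule)). auto_derive. auto.
Qed.
Lemma sq_int_bound p g c K : 0<p -> 0 <= K -> (forall y, ex_derive g y) ->
  (forall y, Rabs (g y) <= K * phi p y) -> sq_int (fun x => g (x + c)).
Proof.
intros hp hK hd hb. unfold sq_int. set (A := exp (ln 2 / p - c)).
apply improper_mono with (M := (K*A)^2/2).
- intro x. apply (ex_derive_continuous (V:=R_NormedModule)). auto_derive. apply hd.
- intros; apply pow2_ge_0.
- intros b hb0. eapply Rle_trans.
  apply (RInt_le _ (fun x => (K*A)^2 * exp(-2*x))). lra.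
  apply (ex_RInt_continuous (V:=R_CompleteNormedModule)). intros z _. apply (ex_derive_continuous (V:=R_NormedModule)). auto_derive. apply hd.
  apply (ex_RInt_continuous (V:=R_CompleteNormedModule)). intros z _. apply (ex_derive_continuous (V:=R_NormedModule)). auto_derive. auto.
  intros x hx.
  assert (e1 : phi p (x + c) <= A * exp (- x)).
  { unfold A. rewrite <- exp_plus. replace (ln 2 / p - c + - x) with (ln 2 / p - (x + c)) by ring. apply phi_bound; auto. }
  assert (e2 : exp (-2 * x) = exp (-x) ^ 2). { simpl. rewrite Rmult_1_r, <- exp_plus. f_equal. ring. }
  rewrite e2, <- (pow2_abs (g (x + c))). rewrite <- Rpow_mult_distr. apply pow_incr. split. apply Rabs_pos.
  eapply Rle_trans. apply hb. replace (K * A * exp (-x)) with (K * (A * exp (-x))) by ring. apply Rmult_le_compat_l; auto.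
  rewrite RInt_expo. pose proof (exp_pos (-2*b)). pose proof (pow2_ge_0 (K*A)). nra.
Qed.

Lemma bd_phi p y : Rabs (phi p y) <= 1 * phi p y.
Proof. rewrite Rabs_pos_eq. lra. left; apply phi_pos. Qed.

Lemma bd_d1 p y : Rabs (d1f p y) <= 1 * phi p y.
Proof. unfold d1f. pose proof (phi_pos p y). pose proof (cosh_pos' (p*y)).
rewrite Rabs_mult, Rabs_Ropp, Rabs_pos_eq by lra. rewrite Rmult_comm.
apply Rmult_le_compat_r; [lra|]. unfold Rdiv. rewrite Rabs_mult, Rabs_inv, (Rabs_pos_eq (cosh _)) by lra.
pose proof (sinh_le_cosh (p*y)). 
replace 1 with (cosh (p*y) * / cosh (p*y)) by (field; lra).
apply Rmult_le_compat_r; auto. left; apply Rinv_0_lt_compat; lra. Qed.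

Lemma bd_d2 p y : 0 < p -> Rabs (d2f p y) <= (p+2) * phi p y.
Proof. intro hp. unfold d2f. pose proof (phi_pos p y). pose proof (cosh_ge1 (p*y)).
rewrite Rabs_mult, Rabs_pos_eq by lra. rewrite Rmult_comm.
apply Rmult_le_compat_r; [lra|].
assert (h1 : 1 <= cosh (p*y) ^ 2) by (simpl; nra).
assert (h2 : 0 < (p+1) / cosh (p*y) ^ 2) by (apply Rdiv_lt_0_compat; lra).
assert (h3 : (p+1) / cosh (p*y) ^ 2 <= p + 1).
{ apply Rle_div_l; nra. }
apply Rabs_le. lra. Qed.

Lemma shift_der (f df : R -> R) c x : is_derive f (x+c) (df (x+c)) ->
  is_derive (fun x => f (x+c)) x (df (x+c)).
Proof. intro h.
assert (hg : is_derive (fun x : R => x + c) x 1) by (auto_derive; auto; ring).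
pose proof (is_derive_comp f (fun x => x + c) x _ _ h hg) as H.
replace (df (x+c)) with (scal 1 (df (x+c))). exact H. unfold scal; simpl; unfold mult; simpl. ring. Qed.

Lemma right_lim (f : R -> R) : ex_derive f 0 -> filterlim f (at_right 0) (locally (f 0)).
Proof. intro h. eapply filterlim_filter_le_1. apply filter_le_within.
apply (ex_derive_continuous (V:=R_NormedModule)). exact h. Qed.

Lemma H2_shift p c : 0 < p ->
  H2_half (fun x => phi p (x+c)) (fun x => d1f p (x+c)) (fun x => d2f p (x+c)).
Proof. intro hp. split; [intros x _; split | split; [|split; [|split; [|split]]]].
- apply shift_der. apply der1; auto.
- apply shift_der. apply der2; auto.
- apply right_lim. eexists. apply shift_der. apply der1; auto.
- apply right_lim. eexists. apply shift_der. apply der2; auto.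
- apply (sq_int_bound p (phi p) c 1); auto; try lra. intro; eexists; apply der1; auto. apply bd_phi.
- apply (sq_int_bound p (d1f p) c 1); auto; try lra. intro; eexists; apply der2; auto. apply bd_d1.
- apply (sq_int_bound p (d2f p) c (p+2)); auto; try lra. intro; apply der3; auto. intro; apply bd_d2; auto.
Qed.

Lemma ode p y : 0 < p -> - d2f p y + phi p y - (p + 1) * absPow (phi p y) (2 * p) * phi p y = 0.
Proof. intro hp. pose proof (phi_pos p y) as h. unfold absPow.
destruct (Req_EM_T (phi p y) 0) as [e|ne]; [lra|].
rewrite Rabs_pos_eq by lra.
assert (Rpower (phi p y) (2*p) = (/ cosh (p*y))^2).
{ unfold phi. rewrite Rpower_mult. replace (/p * (2*p)) with (INR 2) by (simpl; field; lra).
  apply Rpower_pow. apply Rinv_0_lt_compat, cosh_pos'. }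
rewrite H. unfold d2f. pose proof (cosh_pos' (p*y)). cbn [ssrbool.is_left]. field. lra. Qed.

Lemma cosh_opp x : cosh (- x) = cosh x.
Proof. unfold cosh. rewrite Ropp_involutive. lra. Qed.
Lemma sinh_opp x : sinh (- x) = - sinh x.
Proof. unfold sinh. rewrite Ropp_involutive. lra. Qed.

Lemma phi_even p a : phi p (- a) = phi p a.
Proof. unfold phi. replace (p * - a) with (- (p*a)) by ring. rewrite cosh_opp. auto. Qed.

Lemma d1f_odd p a : d1f p (- a) = - d1f p a.
Proof. unfold d1f. rewrite phi_even. replace (p * - a) with (- (p*a)) by ring.
rewrite cosh_opp, sinh_opp. unfold Rdiv. ring. Qed.

Lemma phi_one p y : 0 < p -> phi p y = 1 -> y = 0.
Proof. intros hp h. unfold phi, Rpower in h. rewrite <- exp_0 in h. apply exp_inv in h.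
assert (h2 : ln (/ cosh (p*y)) = 0).
{ assert (/p * ln (/ cosh (p * y)) * p = 0) by (rewrite h; ring).
  replace (ln (/ cosh (p * y))) with (/ p * ln (/ cosh (p * y)) * p) by (field; lra). auto. }
rewrite <- ln_1 in h2. apply ln_inv in h2; [|apply Rinv_0_lt_compat, cosh_pos'|lra].
assert (hc : cosh (p*y) = 1).
{ rewrite <- (Rinv_inv (cosh (p*y))), h2. apply Rinv_1. }
unfold cosh in hc. rewrite exp_Ropp in hc. pose proof (exp_pos (p*y)).
set (e := exp (p*y)) in *.
assert (e = 1).
{ assert ((e - 1)^2 = 0). { replace ((e-1)^2) with (e * ((e + / e) - 2)) by (field; lra). 
    replace (e + / e) with 2 by lra. ring. }
  assert ((e-1)*(e-1) = 0) by (simpl in H0; lra). destruct (Rmult_integral _ _ H1); lra. }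
assert (p * y = 0). { rewrite <- (ln_exp (p*y)), <- (ln_exp 0), exp_0. change (ln e = ln 1). rewrite H0. reflexivity. }
destruct (Rmult_integral _ _ H1); lra.
Qed.

Lemma phi0 p : phi p 0 = 1.
Proof. unfold phi, Rpower. rewrite Rmult_0_r, cosh_0, Rinv_1, ln_1, Rmult_0_r. apply exp_0. Qed.

Lemma phi_shift_inj p u v : 0 < p -> (forall x, phi p (x + u) = phi p (x + v)) -> u = v.
Proof. intros hp h. specialize (h (-u)). replace (-u + u) with 0 in h by ring.
rewrite phi0 in h. symmetry in h. apply phi_one in h; auto. lra. Qed.

From HB Require Import structures.
From Stdlib Require Import FunctionalExtensionality PropExtensionality.
From mathcomp Require Import all_boot zify.
Local Open Scope R_scope.

Lemma Rplus_assoc' : associative Rplus.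
Proof. move=> x y z. by rewrite Rplus_assoc. Qed.
HB.instance Definition _ := Monoid.isComLaw.Build R 0 Rplus Rplus_assoc' Rplus_comm Rplus_0_l.

Lemma iter_pm (k : nat) (v : R) : iter k (Rplus v) 0 + iter k (Rplus (- v)) 0 = 0.
Proof. elim: k => [|k IH] /=; lra. Qed.

Lemma kirch (N : nat) (S : {set 'I_N}) (v : R) : #|S| = #|~: S| ->
  \big[Rplus/0]_(j < N) (if j \in S then v else - v) = 0.
Proof.
move=> hc. rewrite (bigID (fun j => j \in S)) /=.
rewrite [X in X + _](eq_bigr (fun _ => v)); last by move=> j ->.
rewrite [X in _ + X](eq_bigr (fun _ => - v)); last by move=> j /negbTE ->.
rewrite [X in _ + X](eq_bigl (fun j => j \in ~: S)); last by move=> j; rewrite in_setC.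
rewrite !big_const hc. apply: iter_pm.
Qed.

Lemma fam_compl (N : nat) (S : {set 'I_N}) p : nls_family S p = nls_family (~: S) p.
Proof.
apply: functional_extensionality => Psi; apply: propositional_extensionality.
split; move=> [a ->]; exists (- a); apply: functional_extensionality => j;
  apply: functional_extensionality => x; rewrite /state in_setC;
  case: (j \in S) => /=; f_equal; ring.
Qed.

Theorem lemma3p4 (p : R) (N : nat) :
  (0 < p) -> ~~ odd N -> (0 < N)%N ->
  (forall (S : {set 'I_N}) (a : R), #|S| = N./2 ->
     NLS_H2_solution p (state S p a)) /\
  exists F : {set {set 'I_N}},
    #|F| = (N`! %/ (2 * (N./2)`! ^ 2))%N /\
    (forall S, S \in F -> #|S| = N./2) /\
    (forall S T, S \in F -> T \in F -> nls_family S p = nls_family T p -> S = T) /\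
    (forall S : {set 'I_N}, #|S| = N./2 ->
       exists2 T, T \in F & nls_family S p = nls_family T p).
Proof.
move=> hp hev hN.
set k := N./2.
have hNk : N = (k + k)%N.
{ have := odd_double_half N. rewrite (negbTE hev) -addnn /= add0n => h. by rewrite -{1}h. }
have hcC : forall S : {set 'I_N}, #|S| = k -> #|~: S| = k.
{ move=> S hS. have := cardsC S. rewrite card_ord hS. lia. }
split.
{ move=> S a hS.
  exists (fun j x => if j \in S then d1f p (x + a) else d1f p (x - a)).
  exists (fun j x => if j \in S then d2f p (x + a) else d2f p (x - a)).
  split; [|split; [|split]].
  - move=> j. rewrite /state. case: (j \in S).
    + exact: (H2_shift p a hp).
    + exact: (H2_shift p (- a) hp).
  - have E : phi p (0 - a) = phi p (0 + a).
    { rewrite -phi_even. f_equal. ring. }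
    move=> j l. rewrite /state. case: (j \in S); case: (l \in S); by rewrite ?E.
  - have E : d1f p (0 - a) = - d1f p (0 + a).
    { rewrite -d1f_odd. f_equal. ring. }
    under eq_bigr do rewrite E.
    apply: kirch. by rewrite hcC.
  - move=> j x hx. rewrite /state. case: (j \in S); apply: ode; exact: hp. }
have i0 : 'I_N := Ordinal hN.
set F := [set S : {set 'I_N} | (#|S| == k) && (i0 \in S)].
exists F.
split; [|split; [|split]].
- set A := [set S : {set 'I_N} | #|S| == k].
  set G := [set S : {set 'I_N} | (#|S| == k) && (i0 \notin S)].
  have hA : #|A| = 'C(N, k) by rewrite card_draws card_ord.
  have hsplit : #|A| = (#|F| + #|G|)%N.
  { rewrite -(cardsID F A).
    have -> : A :&: F = F by apply/setP => x; rewrite !inE; case: (_ == _); case: (i0 \in x).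
    have -> : A :\: F = G by apply/setP => x; rewrite !inE; case: (_ == _); case: (i0 \in x).
    done. }
  have hGF : G = [set ~: S | S in F].
  { apply/setP => X. rewrite -[X]setCK (mem_imset _ _ (@setC_inj _)) !inE setCK negbK.
    have hc := cardsC X. rewrite card_ord in hc.
    congr (_ && _). apply/eqP/eqP => h; lia. }
  have hG : #|G| = #|F| by rewrite hGF card_imset //; exact: setC_inj.
  have hkN : (k <= N)%N by lia.
  have hf : N`! = (#|F| * (2 * k`! ^ 2))%N.
  { rewrite -(bin_fact hkN). have -> : (N - k)%N = k by lia.
    rewrite -hA hsplit hG. nia. }
  rewrite hf mulnK //. by rewrite muln_gt0 expn_gt0 fact_gt0.
- move=> S. rewrite inE => /andP [/eqP -> _]. done.
- move=> S T. rewrite !inE => /andP [_ hS] /andP [_ hT] E.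
  have : nls_family S p (state S p 1) by exists 1.
  rewrite E => -[b hb].
  have hj : forall j x, state S p 1 j x = state T p b j x by move=> j x; rewrite hb.
  have b1 : b = 1.
  { have h0 := hj i0. rewrite /state hS hT in h0. symmetry. exact: (phi_shift_inj _ _ _ hp h0). }
  apply/setP => j.
  have h1 := hj j. rewrite /state in h1.
  case hSj: (j \in S); case hTj: (j \in T); rewrite hSj hTj in h1 => //.
  + have := phi_shift_inj _ _ _ hp h1. lra.
  + have := phi_shift_inj _ _ _ hp h1. lra.
- move=> S hS. case h0: (i0 \in S).
  + exists S => //. by rewrite inE hS eqxx h0.
  + exists (~: S); last exact: fam_compl.
    by rewrite inE in_setC h0 hcC // eqxx.
Qed.
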